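(* Let $C_{\mathbb S}>0$ and $\mathbb{S}^d=\{x\in\mathbb{R}^{d+1}:\langle x,x\rangle=C_{\mathbb S}^{-1}\}$. Let $p\in\mathbb{S}^d$, $w\in T_p\mathbb{S}^d=p^{\perp}$, and let $H_{p,w}=\{x\in\mathbb{S}^d:\langle w,x\rangle=0\}$. If $\langle w,w\rangle=C_{\mathbb S}$, then for all $x\in\mathbb{S}^d$, $$\min_{y\in H_{p,w}}d(x,y)=\frac{1}{\sqrt{C_{\mathbb S}}}\,\mathrm{asin}\,|\langle w,x\rangle|=\frac{1}{\sqrt{C_{\mathbb S}}}\,\big|g_{p_\circ}(w,\log_{p_\circ}(x))\big|,$$ where $p_\circ=C_{\mathbb S}^{-1/2}\|P_w^\perp x\|^{-1}P_w^\perp x\in H_{p,w}$ and $P_w^\perp x=x-\frac{\langle x,w\rangle}{\langle w,w\rangle}w$.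
   Context: $\langle\cdot,\cdot\rangle$ is the standard dot product and $\|\cdot\|$ the Euclidean norm. On $\mathbb{S}^d$ the Riemannian metric is $g_q(u,v)=\langle u,v\rangle$ for $u,v\in T_q\mathbb{S}^d=q^\perp$; the geodesic distance is $d(x,q)=\frac{1}{\sqrt{C_{\mathbb S}}}\mathrm{acos}(C_{\mathbb S}\langle x,q\rangle)$; the logarithmic map is $\log_q(x)=\frac{\theta}{\sin\theta}(x-q\cos\theta)$ with $\theta=\sqrt{C_{\mathbb S}}\,d(x,q)$. *)

(* Defs.v *)
From HB Require Import structures.
From mathcomp Require Import all_boot all_order all_algebra.
From mathcomp Require Import all_classical all_reals all_analysis.
Set Implicit Arguments. Unset Strict Implicit. Unset Printing Implicit Defensive.
Import Order.TTheory GRing.Theory Num.Theory.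
Local Open Scope ring_scope.

Definition dot {R : realType} {n : nat} (u v : 'rV[R]_n) : R :=
  \sum_(i < n) u 0 i * v 0 i.

Definition enorm {R : realType} {n : nat} (u : 'rV[R]_n) : R := Num.sqrt (dot u u).

Definition on_sphere {R : realType} {n : nat} (C : R) (x : 'rV[R]_n) : Prop :=
  dot x x = C^-1.

Definition geod {R : realType} {n : nat} (C : R) (x q : 'rV[R]_n) : R :=
  (Num.sqrt C)^-1 * acos (C * dot x q).

Definition logmap {R : realType} {n : nat} (C : R) (q x : 'rV[R]_n) : 'rV[R]_n :=
  let theta := Num.sqrt C * geod C x q in
  (theta / sin theta) *: (x - cos theta *: q).

Definition Hpw {R : realType} {n : nat} (C : R) (w : 'rV[R]_n) : set 'rV[R]_n :=
  [set x | on_sphere C x /\ dot w x = 0].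

Definition Pperp {R : realType} {n : nat} (w x : 'rV[R]_n) : 'rV[R]_n :=
  x - (dot x w / dot w w) *: w.

Definition pcirc {R : realType} {n : nat} (C : R) (w x : 'rV[R]_n) : 'rV[R]_n :=
  ((Num.sqrt C)^-1 * (enorm (Pperp w x))^-1) *: Pperp w x.

(* Main.v *)
Require Import Defs.
From HB Require Import structures.
From mathcomp Require Import all_boot all_order all_algebra.
From mathcomp Require Import all_classical all_reals all_analysis.
From mathcomp Require Import ring lra.
Import Order.TTheory GRing.Theory Num.Theory.
Local Open Scope ring_scope.
Local Open Scope classical_set_scope.

Section H.
Context {R : realType}.
Context {n : nat}.
Implicit Types u v z : 'rV[R]_n.

Lemma dotC u v : dot u v = dot v u.
Proof. by rewrite /dot; apply eq_bigr => i _; rewrite mulrC. Qed.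
Lemma dotDl u v z : dot (u + v) z = dot u z + dot v z.
Proof. by rewrite /dot -big_split; apply eq_bigr => i _; rewrite mxE mulrDl. Qed.
Lemma dotZl k u z : dot (k *: u) z = k * dot u z.
Proof. by rewrite /dot mulr_sumr; apply eq_bigr => i _; rewrite mxE mulrA. Qed.
Lemma dotNl u z : dot (- u) z = - dot u z.
Proof. by rewrite -scaleN1r dotZl mulN1r. Qed.
Lemma dotBl u v z : dot (u - v) z = dot u z - dot v z.
Proof. by rewrite dotDl dotNl. Qed.
Lemma dotDr u v z : dot z (u + v) = dot z u + dot z v.
Proof. by rewrite dotC dotDl !(dotC z). Qed.
Lemma dotZr k u z : dot z (k *: u) = k * dot z u.
Proof. by rewrite dotC dotZl (dotC z). Qed.
Lemma dotBr u v z : dot z (u - v) = dot z u - dot z v.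
Proof. by rewrite dotC dotBl !(dotC z). Qed.
Lemma dot0l u : dot 0 u = 0.
Proof. by rewrite /dot big1 // => i _; rewrite mxE mul0r. Qed.
Lemma dot_ge0 u : 0 <= dot u u.
Proof. by rewrite /dot sumr_ge0 // => i _; rewrite -expr2 sqr_ge0. Qed.
Lemma dot_eq0 u : dot u u = 0 -> u = 0.
Proof.
move=> /eqP; rewrite /dot psumr_eq0 => [/allP H|i _]; last by rewrite -expr2 sqr_ge0.
apply/matrixP => i j; rewrite ord1 mxE.
by have := H j (mem_index_enum j); rewrite /= mulf_eq0 orbb => /eqP.
Qed.
End H.

Lemma acos_le (R : realType) (a b : R) : -1 <= a <= 1 -> -1 <= b <= 1 -> a <= b -> acos b <= acos a.
Proof.
move=> ha hb ab; rewrite leNgt; apply/negP => H.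
have := H; rewrite -ltr_cos ?in_itv/= ?acos_ge0 ?acos_lepi // !acosK ?in_itv //.
by rewrite ltNge ab.
Qed.

Theorem proposition1 (R : realType) (d : nat) (C : R) (p w : 'rV[R]_(d.+1)) :
  0 < C ->
  on_sphere C p ->
  dot w p = 0 ->
  dot w w = C ->
  forall x : 'rV[R]_(d.+1), on_sphere C x ->
    let v := (Num.sqrt C)^-1 * asin `|dot w x| in
    ((exists2 y, Hpw C w y & geod C x y = v) /\
     (forall y, Hpw C w y -> v <= geod C x y)) /\
    (Pperp w x != 0 ->
       Hpw C w (pcirc C w x) /\
       v = (Num.sqrt C)^-1 * `|dot w (logmap C (pcirc C w x) x)|).
Proof.
move=> C0 hp hwp hww x hx v.
rewrite /on_sphere in hp hx.
have C0' : C != 0 by rewrite gt_eqF.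
set a := dot w x.
set P := Pperp w x.
have hxw : dot x w = a by rewrite dotC.
have hP : P = x - (a / C) *: w by rewrite /P /Pperp hxw hww.
have hx' : x = P + (a / C) *: w by rewrite hP subrK.
have hPd : Pperp w x = P by [].
clearbody P.
have hwP : dot w P = 0.
  by rewrite hP dotBr dotZr hww -/a divfK // subrr.
have hPP : dot P P = (1 - a ^+ 2) / C.
  rewrite {1}hP dotBl dotZl hwP mulr0 subr0.
  rewrite hP dotBr dotZr hx hxw; field; exact: C0'.
have ha1 : a ^+ 2 <= 1.
  have := dot_ge0 P; rewrite hPP pmulr_lge0 ?invr_gt0 // subr_ge0 //.
have ha : -1 <= `|a| <= 1.
  rewrite (le_trans _ (normr_ge0 a)) ?lerN10 //=.
  by rewrite -(ler_pXn2r (n:=2)) ?expr1n ?real_normK ?num_real ?nnegrE //.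
set s := Num.sqrt (1 - a ^+ 2).
have s0 : 0 <= s by rewrite sqrtr_ge0.
have s1 : s <= 1 by rewrite -sqrtr1 ler_sqrt ?ler01 // lerBlDr lerDl sqr_ge0.
have ss : s ^+ 2 = 1 - a ^+ 2 by rewrite sqr_sqrtr // subr_ge0.
have hs : -1 <= s <= 1 by rewrite s1 andbT (le_trans _ s0) ?lerN10.
have Hsin : sin (acos s) = `|a|.
  by rewrite sin_acos // ss opprB addrC subrK sqrtr_sqr.
have u0 : 0 <= acos s by rewrite acos_ge0.
have Hv : v = (Num.sqrt C)^-1 * acos s.
  rewrite /v; congr (_ * _).
  have u1 : acos s <= pi / 2 by rewrite -acos0 acos_le // ?lerN10 ?ler01.
  rewrite -[in LHS]Hsin.
  rewrite sinK // in_itv /= u1 andbT (le_trans _ u0) // oppr_le0 divr_ge0 ?pi_ge0 //.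
have Hxy : forall y, dot w y = 0 -> dot x y = dot P y.
  by move=> y hy; rewrite hx' dotDl dotZl hy mulr0 addr0.
have sC0 : 0 < Num.sqrt C by rewrite sqrtr_gt0.
have sCn : Num.sqrt C != 0 by rewrite gt_eqF.
have sC2 : Num.sqrt C ^+ 2 = C by rewrite sqr_sqrtr // ltW.
have Hlow : forall y, Hpw C w y -> v <= geod C x y.
  move=> y [hy hwy]; rewrite /on_sphere in hy.
  rewrite Hv /geod ler_wpM2l ?invr_ge0 ?sqrtr_ge0 //.
  have hxyP := Hxy y hwy.
  have lo : -1 <= C * dot x y.
    have := dot_ge0 (x + y); rewrite !dotDl !dotDr hx hy (dotC y x) => h.
    have : 0 <= C * (C^-1 + dot x y + (dot x y + C^-1)) by rewrite mulr_ge0 // ltW.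
    rewrite !mulrDr mulfV //; lra.
  have up : C * dot x y <= s.
    have := dot_ge0 (P - s *: y); rewrite !dotBl !dotBr !dotZl !dotZr; rewrite hPP hy (dotC y P) -hxyP => h.
    have h2 : 0 <= C * ((1 - a ^+ 2) / C - s * dot x y - (s * dot x y - s * (s * C^-1))).
      by rewrite mulr_ge0 // ltW.
    have e : C * ((1 - a ^+ 2) / C - s * dot x y - (s * dot x y - s * (s * C^-1)))
       = 2 * (s * (s - C * dot x y)) by rewrite -ss; field.
    rewrite e in h2.
    have [s00|sp] := eqVneq s 0.
      have P0 : P = 0.
        by apply: dot_eq0; rewrite hPP -ss s00; field.
      by rewrite hxyP P0 dot0l mulr0 s00.
    have sp' : 0 < s by rewrite lt_def sp s0.
    move: h2; rewrite pmulr_rge0 ?ltr0n // pmulr_rge0 // subr_ge0 //.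
  by apply: acos_le => //; rewrite lo /= (le_trans up s1).
have Hq : P != 0 -> Hpw C w (pcirc C w x) /\ C * dot x (pcirc C w x) = s.
  move=> Pn0.
  have PP0 : 0 < dot P P.
    by rewrite lt_def dot_ge0 andbT; apply/eqP => /dot_eq0 /eqP; rewrite (negbTE Pn0).
  have nP0 : 0 < enorm P by rewrite /enorm sqrtr_gt0.
  have nP2 : enorm P ^+ 2 = dot P P by rewrite sqr_sqrtr // ltW.
  have hs' : s = Num.sqrt C * enorm P.
    by rewrite /s /enorm -sqrtrM ?(ltW C0) // hPP; congr Num.sqrt; field.
  have -> : pcirc C w x = ((Num.sqrt C)^-1 * (enorm P)^-1) *: P by rewrite /pcirc hPd.
  rewrite hs' /Hpw /on_sphere /=; rewrite dotZl !dotZr hwP mulr0 (Hxy P hwP) -nP2.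
  have nPn : enorm P != 0 by rewrite gt_eqF.
  move: sC2 sCn nPn; set t := Num.sqrt C; set m := enorm P; clearbody t m => sC2 sCn nPn.
  rewrite -!sC2; split; [split => //|]; field; by rewrite sCn nPn.
split; [split => // |].
  have [P0|Pn0] := eqVneq P 0.
    exists p; first by split.
    have s00 : s = 0.
      have : dot P P = 0 by rewrite P0 dot0l.
      rewrite hPP => /eqP; rewrite mulf_eq0 invr_eq0 (negbTE C0') orbF => /eqP e.
      by rewrite /s e sqrtr0.
    by rewrite Hv /geod (Hxy p hwp) P0 dot0l mulr0 s00.
  case: (Hq Pn0) => hH hC.
  by exists (pcirc C w x) => //; rewrite Hv /geod hC.
move=> Pn0; case: (Hq Pn0) => hH hC; split => //.
case: (hH) => _ hwq.
rewrite /logmap /= /geod hC mulVKf // dotZr dotBr dotZr hwq mulr0 subr0 Hsin Hv -/a.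
congr (_ * _).
have [a0|an0] := eqVneq a 0.
  rewrite a0 mulr0 normr0 /s a0 expr0n /= subr0 sqrtr1 acos1 //.
by rewrite normrM normf_div normr_id divfK ?normr_eq0 // ger0_norm.
Qed.
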